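(* For every finite graph $G$, $\widetilde{\Delta}(G) \leq \alpha^{\ast}(G)^{\widetilde{\omega}(G)}$.
   Context: Two vertices of $G$ are equivalent if they lie in exactly the same maximal cliques of $G$. The clique-quotient graph $\widetilde{G}$ has the equivalence classes as vertices, two distinct classes adjacent iff their representatives are adjacent in $G$; $\widetilde{\Delta}(G)$ is the maximum degree of $\widetilde{G}$. $\widetilde{\omega}(G)$ is the maximum over maximal cliques $K$ of the number of equivalence classes meeting $K$. $\alpha^{\ast}(G)=\max_v\alpha(G[N[v]])$. *)

(* Defs.v *)
(* A finite simple graph: vertex type T : finType,
   adjacency e : rel T, symmetric and irreflexive. *)
From mathcomp Require Import all_boot.
Set Implicit Arguments. Unset Strict Implicit. Unset Printing Implicit Defensive.

Section Graph.
Variables (T : finType) (e : rel T).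

Definition clique (K : {set T}) : bool :=
  [forall x in K, forall y in K, (x != y) ==> e x y].

Definition maxclique (K : {set T}) : bool := maxset clique K.

Definition cequiv (u v : T) : bool :=
  [forall K : {set T}, maxclique K ==> ((u \in K) == (v \in K))].

Definition cclass (v : T) : {set T} := [set u | cequiv u v].

(* vertex set of the clique-quotient graph *)
Definition cclasses : {set {set T}} := [set cclass v | v in T].

(* adjacency in the clique-quotient graph: distinct classes with adjacent
   representatives (well defined; we use "some representatives") *)
Definition qadj (C D : {set T}) : bool :=
  (C != D) && [exists u in C, exists w in D, e u w].

Definition Delta_tilde : nat :=
  \max_(C in cclasses) #|[set D in cclasses | qadj C D]|.

Definition omega_tilde : nat :=
  \max_(K : {set T} | maxclique K) #|[set C in cclasses | C :&: K != set0]|.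

Definition stable (I : {set T}) : bool :=
  [forall x in I, forall y in I, ~~ e x y].

Definition alpha_in (S : {set T}) : nat :=
  \max_(I : {set T} | (I \subset S) && stable I) #|I|.

Definition cnbhd (v : T) : {set T} := v |: [set w | e v w].

Definition alpha_star : nat := \max_(v : T) alpha_in (cnbhd v).

End Graph.

(* Main.v *)
Require Import Defs.
From mathcomp Require Import all_boot zify.
Set Implicit Arguments. Unset Strict Implicit. Unset Printing Implicit Defensive.

Lemma binpow a k : 1 < a -> 'C(a + k, k) <= a ^ k.+1.
Proof.
move=> Ha; elim: k => [|k IH]; first by rewrite bin0 expn1; lia.
case: k IH => [|k] IH; first by rewrite addn1 bin1; rewrite expnS expn1; nia.
have H := mul_bin_diag (a + k.+2) k.+1.
have E : (a + k.+2).-1 = a + k.+1 by lia.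
rewrite E in H.
rewrite -(leq_pmul2l (ltn0Sn k.+1)).
rewrite expnS.
move: H IH; set X := a ^ k.+2; set C0 := 'C(a + k.+1, k.+1); set C1 := 'C(a + k.+2, k.+2) => H IH.
have : (a + k.+2) * C0 <= (a + k.+2) * X by rewrite leq_mul2l IH orbT.
nia.
Qed.

Section G.
Variables (T : finType) (e : rel T).
Hypotheses (e_sym : symmetric e) (e_irr : irreflexive e).

Lemma cliqueP (K : {set T}) : reflect (forall x y, x \in K -> y \in K -> x != y -> e x y) (clique e K).
Proof.
apply: (iffP forallP) => H.
- move=> x y Hx Hy Hxy. move: (H x); rewrite Hx /= => /forallP/(_ y).
  by rewrite Hy Hxy.
- move=> x; apply/implyP => Hx; apply/forallP => y; apply/implyP => Hy.
  apply/implyP; exact: H.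
Qed.

Lemma stableP (I : {set T}) : reflect (forall x y, x \in I -> y \in I -> ~~ e x y) (stable e I).
Proof.
apply: (iffP forallP) => H.
- move=> x y Hx Hy. move: (H x); rewrite Hx /= => /forallP/(_ y).
  by rewrite Hy.
- move=> x; apply/implyP => Hx; apply/forallP => y; apply/implyP => Hy.
  exact: H.
Qed.

Lemma ramsey n : forall m k (S : {set T}), m + k <= n ->
  (forall Q : {set T}, Q \subset S -> clique e Q -> #|Q| <= k) ->
  (forall I : {set T}, I \subset S -> stable e I -> #|I| <= m) -> #|S| < 'C(m + k, k).
Proof.
elim: n => [|n IH] m k S Hn HQ HI.
  have -> : S = set0.
    apply/setP => x; rewrite inE; apply/negP => Hx.
    have := HI [set x]; rewrite sub1set Hx cards1 => /(_ isT).
    have -> : stable e [set x].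
      by apply/stableP => y z; rewrite !inE => /eqP -> /eqP ->; rewrite e_irr.
    move=> /(_ isT); lia.
  by rewrite cards0 bin_gt0 leq_addl.
case: (set_0Vmem S) => [->|[x Hx]]; first by rewrite cards0 bin_gt0 leq_addl.
have Hx1 : [set x] \subset S by rewrite sub1set.
case: k HQ Hn => [|k] HQ Hn.
  have := HQ _ Hx1; rewrite cards1.
  have -> : clique e [set x] by apply/cliqueP => y z; rewrite !inE => /eqP -> /eqP ->; rewrite eqxx.
  by move=> /(_ isT).
case: m HI Hn => [|m] HI Hn.
  have := HI _ Hx1; rewrite cards1.
  have -> : stable e [set x] by apply/stableP => y z; rewrite !inE => /eqP -> /eqP ->; rewrite e_irr.
  by move=> /(_ isT).
set B := [set y | e x y].
set N := (S :\ x) :&: B.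
set M := (S :\ x) :\: B.
have HS : #|S| = (#|N| + #|M|).+1.
  by rewrite cardsID (cardsD1 x S) Hx.
have HN : #|N| < 'C(m.+1 + k, k).
  apply: (IH m.+1 k N); first lia.
  - move=> Q HQN HQc.
    have xQ : x \notin Q.
      apply/negP => /(subsetP HQN); by rewrite !inE e_irr andbF.
    have := HQ (x |: Q).
    rewrite cardsU1 xQ add1n ltnS; apply.
      rewrite subUset sub1set Hx /=; apply: (subset_trans HQN).
      by apply/subsetP => y; rewrite !inE => /andP [/andP [_ ->] _].
    apply/cliqueP => y z; rewrite !inE => /orP [/eqP ->|Hy] /orP [/eqP ->|Hz].
    + by rewrite eqxx.
    + by move: (subsetP HQN z Hz); rewrite !inE => /andP [_ ->].
    + by move: (subsetP HQN y Hy); rewrite !inE => /andP [_ ]; rewrite e_sym => ->.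
    + by move: HQc => /cliqueP; apply.
  - move=> I HIN HIs; apply: HI => //; apply: (subset_trans HIN).
    by apply/subsetP => y; rewrite !inE => /andP [/andP [_ ->] _].
have HM : #|M| < 'C(m + k.+1, k.+1).
  apply: (IH m k.+1 M); first lia.
  - move=> Q HQM HQc; apply: HQ => //; apply: (subset_trans HQM).
    by apply/subsetP => y; rewrite !inE => /andP [_ /andP [_ ->]].
  - move=> I HIM HIs.
    have xI : x \notin I.
      apply/negP => /(subsetP HIM); by rewrite !inE eqxx andbF.
    have := HI (x |: I).
    rewrite cardsU1 xI add1n ltnS; apply.
      rewrite subUset sub1set Hx /=; apply: (subset_trans HIM).
      by apply/subsetP => y; rewrite !inE => /andP [_ /andP [_ ->]].
    apply/stableP => y z; rewrite !inE => /orP [/eqP ->|Hy] /orP [/eqP ->|Hz].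
    + by rewrite e_irr.
    + by move: (subsetP HIM z Hz); rewrite !inE => /andP [].
    + by move: (subsetP HIM y Hy); rewrite !inE e_sym => /andP [].
    + by move: HIs => /stableP; apply.
have -> : m.+1 + k.+1 = (m.+1 + k).+1 by lia.
rewrite binS.
have E : m.+1 + k = m + k.+1 by lia.
rewrite E in HN *.
lia.
Qed.


Lemma cequivP u v : reflect (forall K, maxclique e K -> (u \in K) = (v \in K)) (cequiv e u v).
Proof.
apply: (iffP forallP) => H K.
- by move=> HK; move: (H K); rewrite HK /= => /eqP.
- by apply/implyP => HK; apply/eqP; exact: H.
Qed.

Lemma cequiv_refl u : cequiv e u u.
Proof. by apply/cequivP. Qed.
Lemma cequiv_sym u v : cequiv e u v -> cequiv e v u.
Proof. by move/cequivP => H; apply/cequivP => K HK; rewrite H. Qed.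
Lemma cequiv_trans u v w : cequiv e u v -> cequiv e v w -> cequiv e u w.
Proof. by move/cequivP => H1 /cequivP H2; apply/cequivP => K HK; rewrite H1 // H2. Qed.

Lemma cclass_eq u v : cequiv e u v -> cclass e u = cclass e v.
Proof.
move=> H; apply/setP => x; rewrite !inE; apply/idP/idP => Hx.
- exact: cequiv_trans Hx H.
- exact: cequiv_trans Hx (cequiv_sym H).
Qed.

Lemma cclass_mem x y : x \in cclass e y -> cclass e y = cclass e x.
Proof. by rewrite inE => H; rewrite (cclass_eq H). Qed.

Lemma clique1 x : clique e [set x].
Proof. by apply/cliqueP => y z; rewrite !inE => /eqP -> /eqP ->; rewrite eqxx. Qed.

Lemma clique2 x y : e x y -> clique e [set x; y].
Proof.
move=> Hxy; apply/cliqueP => a b; rewrite !inE => /orP [] /eqP -> /orP [] /eqP ->;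
  rewrite ?eqxx // => _; by rewrite // e_sym.
Qed.

Lemma alpha_le v (I : {set T}) : I \subset cnbhd e v -> stable e I -> #|I| <= alpha_star e.
Proof.
move=> H1 H2; apply: (@leq_trans (alpha_in e (cnbhd e v))).
  by rewrite /alpha_in; apply: leq_bigmax_cond; rewrite H1 H2.
exact: (@leq_bigmax _ (fun v => alpha_in e (cnbhd e v))).
Qed.

Lemma small_alpha u y : alpha_star e <= 1 -> e u y ->
  forall K, maxclique e K -> u \in K -> y \in K.
Proof.
move=> Ha Huy K /maxsetP [HK Hmax] HuK.
have Nc : clique e (cnbhd e u).
  apply/cliqueP => a b Ha' Hb' Hab; apply/negPn/negP => Hn.
  have := alpha_le (I := [set a; b]) (v := u).
  rewrite cards2 Hab.
  have -> : [set a; b] \subset cnbhd e u by rewrite subUset !sub1set Ha' Hb'.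
  have -> : stable e [set a; b].
    apply/stableP => c d; rewrite !inE => /orP [] /eqP -> /orP [] /eqP ->;
    by rewrite ?e_irr // e_sym.
  move=> /(_ isT isT); lia.
have sub : K \subset cnbhd e u.
  apply/subsetP => z Hz; rewrite !inE; case: eqVneq => //= Hzu.
  by move/cliqueP: HK; apply => //; rewrite eq_sym.
rewrite -(Hmax _ Nc sub) !inE Huy; exact: orbT.
Qed.

End G.

Theorem lemma5p2 (T : finType) (e : rel T)
    (e_sym : symmetric e) (e_irr : irreflexive e) :
  Delta_tilde e <= alpha_star e ^ omega_tilde e.
Proof.
rewrite /Delta_tilde; apply/bigmax_leqP => C /imsetP [v _ ->].
set Nb := [set D in cclasses e | qadj e (cclass e v) D].
have key : forall D x, D \in Nb -> x \in D -> e v x /\ cclass e x = D /\ D != cclass e v.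
  move=> D x; rewrite !inE => /andP [/imsetP [y _ ->]] /andP [Hne /existsP [u /andP [Hu /existsP [w /andP [Hw Huw]]]]] Hx.
  have Dx := cclass_mem Hx.
  split; last by split; [by [] | rewrite eq_sym].
  have [K HK sub] := maxset_exists (clique2 e_sym Huw).
  have HvK : v \in K.
    rewrite inE in Hu; by rewrite -(elimT (cequivP _ _ _) Hu K HK); apply: (subsetP sub); rewrite !inE eqxx.
  have HxK : x \in K.
    rewrite inE in Hw; have Hx' : cequiv e x y by move: Hx; rewrite inE.
    rewrite (elimT (cequivP _ _ _) (cequiv_trans Hx' (cequiv_sym Hw)) K HK).
    by apply: (subsetP sub); rewrite !inE eqxx orbT.
  move/maxsetP: HK => [/cliqueP HK _]; apply: HK => //.
  apply/negP => /eqP Evx; move: Hne; rewrite Dx -Evx eqxx //.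
pose r (D : {set T}) := odflt v [pick x in D].
have rD : forall D, D \in Nb -> r D \in D.
  move=> D; rewrite inE => /andP [/imsetP [y _ ->] _].
  rewrite /r; case: pickP => [x Hx|H] //=.
  by move: (H y); rewrite inE cequiv_refl.
have rinj : {in Nb &, injective r}.
  move=> D1 D2 H1 H2 E.
  have [_ [<- _]] := key _ _ H1 (rD _ H1).
  have [_ [<- _]] := key _ _ H2 (rD _ H2).
  by rewrite E.
set W := r @: Nb.
rewrite -(card_in_imset rinj) -/W.
have Wv : forall x, x \in W -> e v x /\ ~~ cequiv e x v.
  move=> x /imsetP [D HD ->]; have [H1 [H2 H3]] := key _ _ HD (rD _ HD).
  split => //; apply/negP => /cclass_eq; by rewrite H2 => /eqP; rewrite (negbTE H3).
have Wd : forall x y, x \in W -> y \in W -> cequiv e x y -> x = y.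
  move=> x y /imsetP [D1 H1 ->] /imsetP [D2 H2 ->] /cclass_eq.
  have [_ [-> _]] := key _ _ H1 (rD _ H1).
  by have [_ [-> _]] := key _ _ H2 (rD _ H2); move->.
have HQ : forall Q : {set T}, Q \subset W -> clique e Q -> #|Q|.+1 <= omega_tilde e.
  move=> Q QW Qc.
  have vQ : v \notin Q.
    by apply/negP => /(subsetP QW) /Wv [] ; rewrite e_irr.
  have Qc' : clique e (v |: Q).
    apply/cliqueP => y z; rewrite !inE => /orP [/eqP ->|Hy] /orP [/eqP ->|Hz].
    + by rewrite eqxx.
    + by move=> _; case: (Wv z (subsetP QW z Hz)).
    + by move=> _; case: (Wv y (subsetP QW y Hy)); rewrite e_sym.
    + by move: Qc => /cliqueP; apply.
  have [K HK sub] := maxset_exists Qc'.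
  apply: (@leq_trans #|[set C in cclasses e | C :&: K != set0]|); last first.
    exact: (@leq_bigmax_cond _ (fun K => maxclique e K) (fun K => #|[set C in cclasses e | C :&: K != set0]|)).
  have inj : {in v |: Q &, injective (cclass e)}.
    move=> y z; rewrite !inE => /orP [/eqP ->|Hy] /orP [/eqP ->|Hz] //.
    + move=> E; have : z \in cclass e v by rewrite E inE cequiv_refl.
      rewrite inE.
      by case: (Wv z (subsetP QW z Hz)) => _ /negP.
    + move=> E; have : y \in cclass e v by rewrite -E inE cequiv_refl.
      rewrite inE.
      by case: (Wv y (subsetP QW y Hy)) => _ /negP.
    + move=> E; apply: Wd; try exact: (subsetP QW).
      have : y \in cclass e z by rewrite -E inE cequiv_refl.
      by rewrite inE.
  have -> : #|Q|.+1 = #|v |: Q| by rewrite cardsU1 vQ.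
  rewrite -(card_in_imset inj).
  apply: subset_leq_card; apply/subsetP => C0 /imsetP [y Hy ->].
  rewrite !inE imset_f //=; apply/set0Pn; exists y.
  by rewrite !inE cequiv_refl (subsetP sub).
have HI : forall I : {set T}, I \subset W -> stable e I -> #|I| <= alpha_star e.
  move=> I IW Is; apply: (alpha_le (v := v)) => //.
  apply/subsetP => x /(subsetP IW) /Wv [Hx _]; by rewrite !inE Hx orbT.
have wpos : 0 < omega_tilde e.
  have := HQ set0 (sub0set _); rewrite cards0.
  have -> : clique e set0 by apply/cliqueP => y z; rewrite inE.
  by apply.
case: (leqP (alpha_star e) 1) => Ha.
  have -> : W = set0.
    apply/setP => x; rewrite inE; apply/negP => Hx.
    have [Hvx /negP Hn] := Wv x Hx; apply: Hn.
    apply/cequivP => K HK; apply/idP/idP => H.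
    - by apply: (small_alpha e_sym e_irr Ha _ HK H); rewrite e_sym.
    - exact: (small_alpha e_sym e_irr Ha Hvx HK H).
  by rewrite cards0.
have HQ' : forall Q : {set T}, Q \subset W -> clique e Q -> #|Q| <= (omega_tilde e).-1.
  by move=> Q h1 h2; have := HQ Q h1 h2; lia.
have H := ramsey e_sym e_irr (n := alpha_star e + (omega_tilde e).-1) (leqnn _) HQ' HI.
have H2 := binpow (omega_tilde e).-1 Ha.
rewrite prednK // in H2.
lia.
Qed.
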